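(* For every integer $d\ge7$ and every $k\ge3$, \[ \frac{1}{d}+\frac{1}{d^3}-\frac{1}{d^4}+\sum_{j=3}^{d} d^{-j}\, j! + (2\pi d)^{1/2}\Big(\frac{e^{-1/13}}{\sqrt{2\pi}}\Big)^{d}\,\zeta\Big(\frac{d-1}{2}\Big)-\frac{k}{2d}<0. \]
   Context: $\zeta$ denotes the Riemann zeta function. *)

(* Defs.v *)
From Stdlib Require Import Reals.
From Coquelicot Require Import Coquelicot.
Open Scope R_scope.

Definition zeta (s : R) : R :=
  Series (fun n : nat => / Rpower (INR (n + 1)) s).

(* Main.v *)
Require Import Defs.
From Stdlib Require Import Reals Lra Lia Psatz.
From Coquelicot Require Import Coquelicot.
Open Scope R_scope.

Lemma tele2 : is_series (fun n => 2/(INR n+1) - 2/(INR n+2)) 2.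
Proof.
  assert (H : forall N, sum_n (fun n => 2/(INR n+1) - 2/(INR n+2)) N = 2 - 2/(INR N + 2)).
  { induction N.
    - rewrite sum_O. simpl. field.
    - rewrite sum_Sn, IHN. rewrite S_INR. unfold plus. simpl. field. split; pose proof (pos_INR N); lra. }
  change (is_lim_seq (sum_n (fun n => 2/(INR n+1) - 2/(INR n+2))) 2).
  apply is_lim_seq_ext with (u := fun N => 2 - 2 * /(INR N + 2)).
  { intros; rewrite H; unfold Rdiv; ring. }
  assert (L : is_lim_seq (fun N => 2 - 2 * /(INR N+2)) (2 - 2*0)).
  { apply is_lim_seq_minus'. apply is_lim_seq_const.
  apply is_lim_seq_mult'. apply is_lim_seq_const.
  replace (Finite 0) with (Rbar_inv p_infty) by reflexivity.
  apply is_lim_seq_inv. 2: discriminate.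
  eapply is_lim_seq_plus. apply is_lim_seq_INR. apply is_lim_seq_const. reflexivity. }
  rewrite Rmult_0_r, Rminus_0_r in L. exact L.
Qed.

Lemma zeta_le2 (s : R) : 2 <= s -> zeta s <= 2.
Proof.
  intros Hs. unfold zeta.
  rewrite <- (is_series_unique _ _ tele2).
  apply Series_le. 2: eexists; apply tele2.
  intros n. pose proof (pos_INR n) as Hn.
  replace (INR (n+1)) with (INR n + 1) by (rewrite plus_INR; simpl; ring).
  assert (Hp : 0 < Rpower (INR n + 1) s) by (unfold Rpower; apply exp_pos).
  split. { left. apply Rinv_0_lt_compat; exact Hp. }
  assert (H2 : (INR n + 1)^2 <= Rpower (INR n + 1) s).
  { rewrite <- Rpower_pow by lra. apply Rle_Rpower. lra. simpl. lra. }
  apply Rle_trans with (/ (INR n + 1)^2).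
  { apply Rinv_le_contravar. nra. exact H2. }
  replace (2 / (INR n + 1) - 2 / (INR n + 2)) with (/(INR n+1)^2 + INR n / ((INR n+1)^2 * (INR n + 2))) by (field; lra).
  assert (0 <= INR n / ((INR n+1)^2 * (INR n + 2))).
  { apply Rmult_le_pos. lra. left. apply Rinv_0_lt_compat. nra. }
  lra.
Qed.

Lemma t_mono (x : R) (d : nat) : x = INR d -> forall i, (7 + i <= d)%nat ->
  INR (Factorial.fact (7+i)) / x ^ (7+i) <= INR (Factorial.fact 7) / x ^ 7.
Proof.
  intros Hx i. induction i; intros Hi.
  - rewrite Nat.add_0_r. lra.
  - assert (Hd: INR (8 + i) <= x) by (rewrite Hx; apply le_INR; lia).
    assert (Hx7 : 7 <= x) by (rewrite Hx; replace 7 with (INR 7) by (simpl; ring); apply le_INR; lia).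
    replace (7 + S i)%nat with (S (7+i)) by lia.
    rewrite fact_simpl, mult_INR. change (x ^ S (7+i)) with (x * x^(7+i)).
    pose proof (IHi ltac:(lia)) as IH.
    assert (0 < x ^ (7+i)) by (apply pow_lt; lra).
    replace (INR (S (7 + i)) * INR (Factorial.fact (7 + i)) / (x * x ^ (7 + i)))
      with ((INR (S (7 + i)) / x) * (INR (Factorial.fact (7 + i)) / x ^ (7 + i))) by (field; lra).
    assert (0 <= INR (Factorial.fact (7 + i)) / x ^ (7 + i)).
    { apply Rmult_le_pos. apply pos_INR. left; apply Rinv_0_lt_compat; lra. }
    assert (INR (S (7 + i)) / x <= 1).
    { replace (S (7+i)) with (8+i)%nat by lia. apply (Rmult_le_reg_r x). lra.
      unfold Rdiv. rewrite Rmult_assoc, Rinv_l by lra. lra. }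
    nra.
Qed.

Lemma sum_bound (m : nat) :
  let x := INR (m + 7) in
  sum_f 3 (m+7) (fun j => INR (Factorial.fact j) / x ^ j)
  <= 6 / x^3 + 24 / x^4 + 120 / x^5 + 720 / x^6 + (x - 6) * (5040 / x^7).
Proof.
  intros x. unfold sum_f. replace (m + 7 - 3)%nat with (m+4)%nat by lia.
  set (g := fun i => INR (Factorial.fact (i + 3)) / x ^ (i + 3)).
  assert (Hx: x = INR m + 7) by (unfold x; rewrite plus_INR; simpl; ring).
  assert (Hm : forall m', (m' <= m)%nat -> sum_f_R0 g (m'+4) <= g 0%nat + g 1%nat + g 2%nat + g 3%nat + (INR m' + 1) * g 4%nat).
  { induction m'; intros Hm'.
    - simpl. lra.
    - replace (S m' + 4)%nat with (S (m'+4)) by lia. simpl sum_f_R0.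
      pose proof (IHm' ltac:(lia)). rewrite S_INR.
      assert (g (S (m'+4)) <= g 4%nat).
      { unfold g. replace (S (m'+4) + 3)%nat with (7 + S m')%nat by lia.
        apply (t_mono x (m+7)). reflexivity. lia. }
      lra. }
  eapply Rle_trans. apply Hm. apply le_n.
  unfold g. simpl Nat.add.
  replace (INR (Factorial.fact 3)) with 6 by (simpl; lra).
  replace (INR (Factorial.fact 4)) with 24 by (simpl; lra).
  replace (INR (Factorial.fact 5)) with 120 by (rewrite INR_IZR_INZ; reflexivity).
  replace (INR (Factorial.fact 6)) with 720 by (rewrite INR_IZR_INZ; reflexivity).
  replace (INR (Factorial.fact 7)) with 5040 by (rewrite INR_IZR_INZ; reflexivity).
  replace (INR m + 1) with (x - 6) by lra. lra.
Qed.

Lemma T_bound (m : nat) (Z : R) : Z <= 2 ->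
  let x := INR (m + 7) in
  sqrt (2 * PI * x) * (exp (- (1 / 13)) / sqrt (2 * PI)) ^ (m+7) * Z <= 0.104 / x.
Proof.
  intros HZ x.
  assert (Hx: x = INR m + 7) by (unfold x; rewrite plus_INR; simpl; ring).
  pose proof (pos_INR m) as Hm0.
  pose proof PI2_3_2 as HPI.
  set (p := 2 * PI). assert (Hp : 6 <= p) by (unfold p; lra).
  set (a := sqrt p). assert (Ha : 0 < a) by (apply sqrt_lt_R0; lra).
  assert (Haa : a * a = p) by (apply sqrt_sqrt; lra).
  set (E := exp (- (1/13))).
  assert (HE0 : 0 < E) by apply exp_pos.
  assert (HE1 : E <= 13/14).
  { unfold E. rewrite exp_Ropp. pose proof (exp_ineq1 (1/13) ltac:(lra)).
    apply (Rmult_le_reg_r (exp (1/13))). lra. rewrite Rinv_l by lra. lra. }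
  set (q := E * E). assert (Hq0 : 0 <= q) by (unfold q; nra).
  assert (Hq1 : q <= 169/196) by (unfold q; nra).
  assert (Hind : forall n, (INR n + 7)^3 * q^(n+7) <= 343 * q^7 * p^n).
  { induction n.
    - simpl. lra.
    - rewrite S_INR. replace (S n + 7)%nat with (S (n+7)) by lia.
      change (q ^ S (n+7)) with (q * q^(n+7)). change (p ^ S n) with (p * p^n).
      assert (0 <= q^(n+7)) by (apply pow_le; lra).
      pose proof (pos_INR n).
      assert (H3 : (INR n + 1 + 7)^3 * q <= p * (INR n + 7)^3).
      { assert ((INR n + 1 + 7)^3 <= 6 * (INR n + 7)^3) by nra.
        assert (0 <= (INR n + 1 + 7)^3) by (apply pow_le; lra).
        assert (0 <= (INR n + 7)^3) by (apply pow_le; lra).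
        nra. }
      assert (0 <= (INR n + 7) ^ 3 * q ^ (n + 7)) by (apply Rmult_le_pos; [apply pow_le; lra| lra]).
      nra. }
  rewrite sqrt_mult by lra. fold p. fold a.
  unfold Rdiv at 1. rewrite Rpow_mult_distr, pow_inv.
  set (s := sqrt x). assert (Hs : 0 <= s) by apply sqrt_pos.
  assert (Hss : s * s = x) by (apply sqrt_sqrt; lra).
  set (e := E ^ (m+7)). assert (He : 0 < e) by (apply pow_lt; lra).
  set (b := a ^ (m+7)). assert (Hb : 0 < b) by (apply pow_lt; lra).
  assert (Hee : e * e = q ^ (m+7)) by (unfold e, q; rewrite Rpow_mult_distr; reflexivity).
  assert (Hbb : b * b = p^m * p^6 * p).
  { unfold b. rewrite <- Rpow_mult_distr, Haa. replace (m+7)%nat with ((m+6)+1)%nat by lia. rewrite !pow_add, pow_1. ring. }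
  set (Q := x * a * s * e / b).
  assert (HQ0 : 0 <= Q).
  { unfold Q, Rdiv. assert (0 < /b) by (apply Rinv_0_lt_compat; lra).
    repeat apply Rmult_le_pos; lra. }
  assert (HQQ : Q * Q * (p^m * p^6) = x^3 * q^(m+7)).
  { assert (Q * Q = x * x * (a * a) * (s * s) * (e * e) / (b * b)) by (unfold Q; field; lra).
    rewrite H, Haa, Hss, Hee, Hbb. field; repeat split; try apply pow_nonzero; lra. }
  assert (Hpm : 0 < p^m) by (apply pow_lt; lra).
  assert (Hp6 : 46656 <= p^6).
  { replace 46656 with (6^6) by (simpl; lra). apply pow_incr. lra. }
  assert (Hq7 : q^7 <= (169/196)^7) by (apply pow_incr; lra).
  assert (Hnum : 343 * (169/196)^7 <= 126) by (simpl; lra).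
  pose proof (Hind m) as Hm. rewrite <- Hx in Hm.
  assert (H1 : Q * Q * p^6 <= 126).
  { assert (Q * Q * p^6 * p^m <= 343 * q^7 * p^m) by (rewrite <- Hm, <- HQQ; lra).
    assert (Q * Q * p^6 <= 343 * q^7) by (apply (Rmult_le_reg_r (p^m)); lra). lra. }
  assert (H2 : Q * Q <= 126 / 46656).
  { assert (0 <= Q * Q) by nra. 
    assert (Q * Q * 46656 <= 126) by nra. lra. }
  assert (HQ : Q <= 0.052) by nra.
  replace (a * s * (e * / b) * Z) with (Q * Z / x) by (unfold Q; field; lra).
  unfold Rdiv. apply Rmult_le_compat_r. left; apply Rinv_0_lt_compat; lra.
  nra.
Qed.

Theorem lemma2p4 (d k : nat) (hd : (7 <= d)%nat) (hk : (3 <= k)%nat) :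
  / INR d + / INR d ^ 3 - / INR d ^ 4
  + sum_f 3 d (fun j => INR (Factorial.fact j) / INR d ^ j)
  + sqrt (2 * PI * INR d) * (exp (- (1 / 13)) / sqrt (2 * PI)) ^ d
    * zeta ((INR d - 1) / 2)
  - INR k / (2 * INR d) < 0.
Proof.
  remember (d - 7)%nat as m. replace d with (m+7)%nat by lia.
  assert (Hk : 3 <= INR k) by (replace 3 with (INR 3) by (simpl; ring); apply le_INR; lia).
  pose proof (sum_bound m) as HS. cbv zeta in HS.
  set (x := INR (m+7)) in *.
  assert (Hx : 7 <= x) by (unfold x; rewrite plus_INR; simpl; pose proof (pos_INR m); lra).
  assert (HZ : zeta ((x - 1) / 2) <= 2) by (apply zeta_le2; lra).
  pose proof (T_bound m _ HZ) as HT. cbv zeta in HT. fold x in HT.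
  set (y := / x).
  assert (Hy0 : 0 < y) by (unfold y; apply Rinv_0_lt_compat; lra).
  assert (Hxy : x * y = 1) by (unfold y; field; lra).
  assert (Hy7 : y <= 1/7).
  { unfold y. apply (Rmult_le_reg_r x). lra. rewrite Rinv_l by lra. lra. }
  assert (E : forall n c, c / x ^ n = c * y ^ n) by (intros; unfold Rdiv, y; rewrite pow_inv; reflexivity).
  assert (E' : forall n, / x ^ n = y ^ n) by (intros; unfold y; rewrite pow_inv; reflexivity).
  rewrite !E in HS. rewrite !E'. fold y.
  replace (0.104 / x) with (0.104 * y) in HT by (unfold y; field; lra).
  replace (INR k / (2 * x)) with (INR k * y / 2) by (unfold y; field; lra).
  assert (H7 : (x - 6) * (5040 * y ^ 7) = 5040 * (y^6 - 6 * y^7)).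
  { replace (y^7) with (y * y^6) by ring. replace ((x - 6) * (5040 * (y * y^6))) with (5040 * ((x*y) * y^6 - 6 * (y*y^6))) by ring. rewrite Hxy. ring. }
  rewrite H7 in HS.
  assert (B3 : y^3 <= y / 49) by (simpl; nra).
  assert (B4 : y^4 <= y / 343) by (simpl; nra).
  assert (B5 : y^5 <= y / 2401).
  { assert (y^4 <= 1/2401) by (simpl; nra). simpl in *; nra. }
  assert (B6 : y^6 <= y / 16807).
  { assert (y^5 <= 1/16807) by (simpl; nra). simpl in *; nra. }
  assert (Bq : y^2 * (1 - 6*y) <= 1/243).
  { assert (0 <= (y - 1/9)^2) by apply pow2_ge_0. assert (0 <= (y - 1/9)^2 * (y + 1/18)) by (apply Rmult_le_pos; lra). replace (y^2 * (1 - 6*y)) with (1/243 - 6 * ((y - 1/9)^2 * (y + 1/18))) by field. lra. }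
  assert (Bc : y^3 <= 1/343) by (simpl; nra).
  assert (B67 : y^6 - 6 * y^7 <= y / (343 * 243)).
  { replace (y^6 - 6*y^7) with (y * y^3 * (y^2 * (1 - 6*y))) by ring.
    assert (0 <= y^3) by (apply pow_le; lra).
    assert (0 <= y^2 * (1 - 6*y)) by (apply Rmult_le_pos; nra).
    assert (y^3 * (y^2 * (1 - 6*y)) <= 1/343 * (1/243)) by (apply Rmult_le_compat; lra).
    replace (y * y ^ 3 * (y ^ 2 * (1 - 6 * y))) with (y * (y ^ 3 * (y ^ 2 * (1 - 6 * y)))) by ring.
    nra. }
  assert (0 <= y^4) by (apply pow_le; lra).
  nra.
Qed.
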